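(* Let $\alpha\in(0,1]$. Let $G$ be an $r$-regular graph on $n$ vertices that is determined by its $A_\alpha$-spectrum, let $m\ge1$, and let $H$ be a graph that is $A_\alpha$-cospectral with $G\vee K_m$. If $H$ has (at least) $m$ vertices of degree $n+m-1$, then $H\cong G\vee K_m$.
   Context: All graphs are finite, simple and undirected. For a graph $G$, $A(G)$ is its adjacency matrix, $D(G)$ its diagonal degree matrix, and $A_\alpha(G)=\alpha D(G)+(1-\alpha)A(G)$. Two graphs are $A_\alpha$-cospectral if $A_\alpha$ of each has the same multiset of eigenvalues; a graph is determined by its $A_\alpha$-spectrum if every graph $A_\alpha$-cospectral with it is isomorphic to it. $K_m$ is the complete graph on $m$ vertices and $G\vee H$ is the join (disjoint union plus all edges between the two vertex sets). *)

(* Defs.v *)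
From HB Require Import structures.
From mathcomp Require Import all_boot all_order all_algebra.
Set Implicit Arguments. Unset Strict Implicit. Unset Printing Implicit Defensive.
Import Order.TTheory GRing.Theory Num.Theory.
Local Open Scope ring_scope.

Record graph := Graph {
  gsize : nat;
  gadj : rel 'I_gsize;
  gadj_sym : symmetric gadj;
  gadj_irr : irreflexive gadj }.
Arguments gadj : clear implicits.

Definition deg (G : graph) (v : 'I_(gsize G)) : nat := #|[set w | gadj G v w]|.

Arguments deg : clear implicits.
Definition regular (G : graph) (r : nat) : Prop := forall v, deg G v = r.

Definition adjmx (R : rcfType) (G : graph) : 'M[R]_(gsize G) :=
  \matrix_(i, j) (gadj G i j)%:R.
Definition degmx (R : rcfType) (G : graph) : 'M[R]_(gsize G) :=
  diag_mx (\row_i (deg G i)%:R).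
Definition Aalpha (R : rcfType) (alpha : R) (G : graph) : 'M[R]_(gsize G) :=
  alpha *: degmx R G + (1 - alpha) *: adjmx R G.

(* A_alpha-cospectral: same multiset of eigenvalues, i.e. the same
   characteristic polynomial (the characteristic polynomial of a real
   symmetric matrix splits over R, its roots with multiplicity being the
   eigenvalues). *)
Definition Aalpha_cospectral (R : rcfType) (alpha : R) (G H : graph) : Prop :=
  char_poly (Aalpha alpha G) = char_poly (Aalpha alpha H).

Definition isomorphic (G H : graph) : Prop :=
  exists f : 'I_(gsize G) -> 'I_(gsize H),
    bijective f /\ forall x y, gadj H (f x) (f y) = gadj G x y.

Definition Aalpha_determined (R : rcfType) (alpha : R) (G : graph) : Prop :=
  forall H : graph, Aalpha_cospectral alpha H G -> isomorphic H G.

Definition complete_adj (m : nat) : rel 'I_m := fun i j => i != j.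
Lemma complete_sym m : symmetric (@complete_adj m).
Proof. by move=> i j; rewrite /complete_adj eq_sym. Qed.
Lemma complete_irr m : irreflexive (@complete_adj m).
Proof. by move=> i; rewrite /complete_adj eqxx. Qed.
Definition complete (m : nat) : graph := Graph (@complete_sym m) (@complete_irr m).

Definition join_adj (G H : graph) : rel 'I_(gsize G + gsize H) :=
  fun i j => match split i, split j with
             | inl a, inl b => gadj G a b
             | inr a, inr b => gadj H a b
             | _, _ => true
             end.
Arguments join_adj : clear implicits.
Lemma join_sym G H : symmetric (join_adj G H).
Proof.
move=> i j; rewrite /join_adj.
by case: (split i) => a; case: (split j) => b //; apply: gadj_sym.
Qed.
Lemma join_irr G H : irreflexive (join_adj G H).
Proof. by move=> i; rewrite /join_adj; case: (split i) => a; apply: gadj_irr. Qed.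
Definition join (G H : graph) : graph := Graph (@join_sym G H) (@join_irr G H).

(* Main.v *)
Require Import Defs.
From HB Require Import structures.
From mathcomp Require Import all_boot all_order all_algebra.
From mathcomp Require Import fingroup perm ring zify.
Import Order.TTheory GRing.Theory Num.Theory.
Set Implicit Arguments. Unset Strict Implicit. Unset Printing Implicit Defensive.
Local Open Scope ring_scope.

Section Gen.
Variable R : rcfType.

Lemma poly_eq_nat (p q : {poly R}) : (forall k : nat, p.[k%:R] = q.[k%:R]) -> p = q.
Proof.
move=> H; apply/eqP; rewrite -subr_eq0; apply/negPn/negP => nz.
set rs := [seq (k%:R : R) | k <- iota 0 (size (p - q))].
have Ha : all (root (p - q)) rs.
  by apply/allP => x /mapP [k _ ->]; rewrite /root hornerD hornerN H subrr.
have Hu : uniq rs.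
  rewrite map_inj_uniq ?iota_uniq // => a b /eqP; rewrite eqr_nat => /eqP.
  done.
by move: (max_poly_roots nz Ha Hu); rewrite size_map size_iota ltnn.
Qed.

Lemma poly_eq_gen (Q p q : {poly R}) : Q != 0 ->
  (forall t, Q.[t] != 0 -> p.[t] = q.[t]) -> p = q.
Proof.
move=> nQ H.
have : Q * (p - q) = 0.
  apply: poly_eq_nat => k; rewrite horner0 hornerM.
  case: (eqVneq Q.[k%:R] 0) => [->|nz]; first by rewrite mul0r.
  by rewrite hornerD hornerN H // subrr mulr0.
by move/eqP; rewrite mulf_eq0 (negbTE nQ) /= subr_eq0 => /eqP.
Qed.

Lemma horner_char_poly n (A : 'M[R]_n) t : (char_poly A).[t] = \det (t%:M - A).
Proof.
rewrite /char_poly -horner_evalE -det_map_mx; congr (\det _).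
apply/matrixP => i j; rewrite !mxE /=. idtac.
rewrite horner_evalE hornerD hornerN hornerC hornerMn hornerX.
by case: (i == j).
Qed.

Lemma char_poly_sq n (A : 'M[R]_n) t :
  (char_poly A).[t] * (char_poly A).[-t] = (-1)^+n * (char_poly (A *m A)).[t^+2].
Proof.
rewrite !horner_char_poly -det_mulmx.
have -> : (t%:M - A) *m ((-t)%:M - A) = (-1) *: ((t^+2)%:M - A *m A).
  rewrite mulmxBl !mulmxBr -scalar_mxM mul_scalar_mx mul_mx_scalar.
  rewrite scaleN1r opprB scaleNr mulrN -expr2 opprB.
  by rewrite opprK (raddfN (@scalar_mx R n) (t^+2)) addrCA !addrA subrK.
by rewrite detZ.
Qed.


Lemma char_sq_eq n (A B : 'M[R]_n) : char_poly A = char_poly B ->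
  char_poly (A *m A) = char_poly (B *m B).
Proof.
move=> e; apply: poly_eq_nat => k.
have k0 : 0 <= (k%:R : R) by rewrite ler0n.
rewrite -(sqr_sqrtr k0).
have := char_poly_sq A (Num.sqrt (k%:R)); rewrite e char_poly_sq.
by move/(congr1 ( *%R ((-1) ^+ n))); rewrite !signrMK.
Qed.

Lemma trace_eq n (A B : 'M[R]_n) : char_poly A = char_poly B -> \tr A = \tr B.
Proof.
case: n A B => [|n] A B e; first by rewrite /mxtrace !big_ord0.
by apply: oppr_inj; rewrite -!char_poly_trace // e.
Qed.

Lemma perm_charpoly n1 n2 (e : n1 = n2) (A : 'M[R]_n1) (B : 'M[R]_n2)
  (f : 'I_n1 -> 'I_n2) : bijective f -> (forall i j, A i j = B (f i) (f j)) ->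
  char_poly A = char_poly B.
Proof.
case: n2 / e B f => B f bf HA.
pose s := perm (bij_inj bf).
rewrite /char_poly.
have -> : char_poly_mx A = row_perm s (col_perm s (char_poly_mx B)).
  apply/matrixP => i j; rewrite !mxE !permE HA.
  by rewrite (inj_eq (bij_inj bf)).
rewrite row_permE col_permE !det_mulmx !det_perm odd_permV.
by rewrite mulrCA -signr_addb addbb mulr1.
Qed.

Lemma char_size_eq n1 n2 (A : 'M[R]_n1) (B : 'M[R]_n2) :
  char_poly A = char_poly B -> n1 = n2.
Proof. by move=> e; have := size_char_poly A; rewrite e size_char_poly => -[]. Qed.

Lemma trace_eq2 n1 n2 (A : 'M[R]_n1) (B : 'M[R]_n2) :
  char_poly A = char_poly B -> \tr A = \tr B.
Proof. move=> e; have e' := char_size_eq e; case: n2 / e' B e => B e; exact: trace_eq. Qed.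

Lemma char_sq_eq2 n1 n2 (A : 'M[R]_n1) (B : 'M[R]_n2) :
  char_poly A = char_poly B -> char_poly (A *m A) = char_poly (B *m B).
Proof. move=> e; have e' := char_size_eq e; case: n2 / e' B e => B e; exact: char_sq_eq. Qed.
End Gen.

Lemma card_setE (T : finType) (P : pred T) : #|[set w | P w]| = (\sum_w P w)%N.
Proof.
rewrite -sum1_card big_mkcond /=; apply: eq_bigr => w _; rewrite inE.
by case: (P w).
Qed.

Lemma split_l n m (a : 'I_n) : split (lshift m a) = inl a.
Proof. exact: (unsplitK (inl _ a)). Qed.
Lemma split_r n m (a : 'I_m) : split (rshift n a) = inr a.
Proof. exact: (unsplitK (inr _ a)). Qed.

Lemma join_ll X Y a b : join_adj X Y (lshift _ a) (lshift _ b) = gadj X a b.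
Proof. by rewrite /join_adj !split_l. Qed.
Lemma join_lr X Y a b : join_adj X Y (lshift _ a) (rshift _ b) = true.
Proof. by rewrite /join_adj split_l split_r. Qed.
Lemma join_rl X Y a b : join_adj X Y (rshift _ a) (lshift _ b) = true.
Proof. by rewrite /join_adj split_l split_r. Qed.
Lemma join_rr X Y a b : join_adj X Y (rshift _ a) (rshift _ b) = gadj Y a b.
Proof. by rewrite /join_adj !split_r. Qed.

Lemma deg_join_l X m a : deg (join X (complete m)) (lshift _ a) = (deg X a + m)%N.
Proof.
rewrite /deg card_setE big_split_ord /=; congr (_ + _)%N.
  by rewrite card_setE; apply: eq_bigr => b _; rewrite join_ll.
under eq_bigr => b _ do rewrite join_lr.
by rewrite sum_nat_const card_ord muln1.
Qed.

Lemma deg_join_r X m k : deg (join X (complete m)) (rshift _ k) = (gsize X + m.-1)%N.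
Proof.
rewrite /deg card_setE big_split_ord /=; congr (_ + _)%N.
  under eq_bigr => b _ do rewrite join_rl.
  by rewrite sum_nat_const card_ord muln1.
under eq_bigr => b _ do rewrite join_rr.
rewrite -card_setE -[in RHS](card_ord m) -(cardsC1 k).
by apply: eq_card => x; rewrite !inE /= /complete_adj eq_sym.
Qed.


Section Alg.
Variable R : rcfType.
Variable alpha : R.

Lemma AalphaE X v w : Aalpha alpha X v w =
  alpha * (deg X v)%:R *+ (v == w) + (1 - alpha) * (gadj X v w)%:R.
Proof. by rewrite /Aalpha /degmx /adjmx !mxE -mulrnAr. Qed.

Lemma degE X v : (deg X v)%:R = \sum_w (gadj X v w)%:R :> R.
Proof. by rewrite /deg card_setE natr_sum. Qed.

Lemma tr1 X : \tr (Aalpha alpha X) = \sum_v alpha * (deg X v)%:R.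
Proof.
by rewrite /mxtrace; apply: eq_bigr => v _; rewrite AalphaE eqxx gadj_irr mulr0 addr0 mulr1n.
Qed.

Definition F2 (d : nat) : R := (alpha * d%:R)^+2 + (1 - alpha)^+2 * d%:R.

Lemma tr2 X : \tr (Aalpha alpha X *m Aalpha alpha X) = \sum_v F2 (deg X v).
Proof.
have -> : \tr (Aalpha alpha X *m Aalpha alpha X) = \sum_v \sum_w Aalpha alpha X v w * Aalpha alpha X w v.
  by rewrite /mxtrace; apply: eq_bigr => v _; rewrite mxE.
apply: eq_bigr => v _; rewrite /F2.
rewrite (bigD1 v) //= !AalphaE eqxx gadj_irr mulr0 addr0 mulr1n -expr2.
rewrite degE (bigD1 v) //= gadj_irr add0r mulr_sumr; congr (_ + _).
rewrite mulr_sumr; apply: eq_bigr => w nw; rewrite !AalphaE (negbTE nw) eq_sym (negbTE nw).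
rewrite !mulr0n !add0r (@gadj_sym X w v).
by case: (gadj X v w); rewrite ?mulr1 ?mulr0 ?expr2.
Qed.

Lemma sum_join (F : nat -> R) X m :
  \sum_(v : 'I_(gsize (join X (complete m)))) F (deg (join X (complete m)) v) =
  \sum_(a : 'I_(gsize X)) F (deg X a + m)%N + F (gsize X + m.-1)%N *+ m.
Proof.
rewrite big_split_ord /=; congr (_ + _).
  by apply: eq_bigr => a _; rewrite deg_join_l.
rewrite (eq_bigr (fun _ => F (gsize X + m.-1)%N)); last by move=> k _; rewrite deg_join_r.
by rewrite sumr_const card_ord.
Qed.

Lemma sq_sum_reg n (x : 'I_n -> R) c :
  \sum_a x a = c *+ n -> \sum_a (x a)^+2 = c^+2 *+ n -> forall a, x a = c.
Proof.
move=> E1 E2.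
have hs : \sum_a (x a - c) = 0 by rewrite sumrB E1 sumr_const card_ord subrr.
have h0 : \sum_a (x a - c)^+2 = 0.
  transitivity (\sum_a (x a)^+2 - \sum_(a < n) c^+2 - (c *+ 2) * \sum_a (x a - c)).
    rewrite mulr_sumr -!sumrB; apply: eq_bigr => a _; rewrite mulr2n; ring.
  by rewrite hs mulr0 subr0 E2 sumr_const card_ord subrr.
move=> a; move/eqP: h0; rewrite psumr_eq0 => [/allP/(_ a)|]; last first.
  by move=> i _; rewrite sqr_ge0.
by rewrite mem_index_enum => /(_ isT) /implyP /(_ isT); rewrite sqrf_eq0 subr_eq0 => /eqP.
Qed.

Lemma reg_of_cospec X Y m r : 0 < alpha -> regular Y r -> gsize X = gsize Y ->
  char_poly (Aalpha alpha (join X (complete m))) =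
  char_poly (Aalpha alpha (join Y (complete m))) -> regular X r.
Proof.
move=> a0 rY eXY E.
have T1 := trace_eq2 E; have T2 := trace_eq2 (char_sq_eq2 E).
rewrite !tr1 (sum_join (fun d => alpha * d%:R)) (sum_join (fun d => alpha * d%:R)) in T1.
rewrite !tr2 (sum_join F2) (sum_join F2) in T2.
have ec1 : alpha * (gsize X + m.-1)%N%:R = alpha * (gsize Y + m.-1)%N%:R :> R by rewrite eXY.
have ec2 : F2 (gsize X + m.-1)%N = F2 (gsize Y + m.-1)%N by rewrite eXY.
rewrite ec1 in T1; rewrite ec2 in T2; move/addIr: T1 => T1; move/addIr: T2 => T2.
set c : R := (r + m)%N%:R.
have hY1 : \sum_(a : 'I_(gsize Y)) alpha * (deg Y a + m)%N%:R = (alpha * c) *+ gsize X.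
  by rewrite (eq_bigr (fun _ => alpha * c)) ?sumr_const ?card_ord ?eXY // => a _; rewrite rY.
have hY2 : \sum_(a : 'I_(gsize Y)) F2 (deg Y a + m)%N = F2 (r + m)%N *+ gsize X.
  by rewrite (eq_bigr (fun _ => F2 (r + m)%N)) ?sumr_const ?card_ord ?eXY // => a _; rewrite rY.
rewrite hY1 in T1; rewrite hY2 in T2.
pose x (a : 'I_(gsize X)) : R := (deg X a + m)%N%:R.
have an0 : alpha != 0 by rewrite gt_eqF.
have S1 : \sum_a x a = c *+ gsize X.
  apply: (mulfI an0); rewrite mulr_sumr mulrnAr; exact: T1.
have S2 : \sum_a (x a)^+2 = c^+2 *+ gsize X.
  have eF : \sum_a F2 (deg X a + m)%N = alpha^+2 * \sum_a (x a)^+2 + (1-alpha)^+2 * \sum_a x a.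
    rewrite /F2 big_split !mulr_sumr; congr (_ + _); apply: eq_bigr => a _.
    by rewrite exprMn.
  rewrite eF S1 in T2.
  move: T2; rewrite -(mulr_natr c) -(mulr_natr (F2 _)); set S := \sum_a _; set N := (gsize X)%:R => T2.
  have e : alpha^+2 * (S - c^+2 * N) =
    (alpha ^+ 2 * S + (1 - alpha) ^+ 2 * (c * N)) - F2 (r + m)%N * N.
    by rewrite /F2 -/c; ring.
  rewrite T2 subrr in e; move/eqP: e; rewrite mulf_eq0 expf_eq0 (negbTE an0) andbF /=.
  by rewrite subr_eq0 /N mulr_natr => /eqP.
move=> v; have := sq_sum_reg S1 S2 v; rewrite /x /c => /eqP; rewrite eqr_nat eqn_add2r.
by move/eqP.
Qed.

End Alg.


Lemma mxNE (R : pzRingType) m n (A : 'M[R]_(m,n)) i j : (- A) i j = - A i j.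
Proof. by rewrite /GRing.opp /= /oppmx /map_mx mxE. Qed.

Lemma schur (F : fieldType) n m (X : 'M[F]_n) (Y : 'M[F]_(n, m)) (Z : 'M[F]_(m, n))
  (W : 'M[F]_m) : X \in unitmx ->
  \det (block_mx X Y Z W) = \det X * \det (W - Z *m invmx X *m Y).
Proof.
move=> uX.
have -> : block_mx X Y Z W = block_mx X 0 Z 1%:M *m
           block_mx 1%:M (invmx X *m Y) 0 (W - Z *m invmx X *m Y).
  rewrite mulmx_block !mulmx0 !mulmx1 !mul0mx !addr0 mulmxA mulmxV // mul1mx.
  by rewrite mul1mx mulmxA addrC subrK.
by rewrite det_mulmx det_lblock det_ublock !det1 mulr1 mul1r.
Qed.

Lemma sum_delta (R : pzRingType) n (x : R) (i : 'I_n) : \sum_w x *+ (i == w) = x.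
Proof.
rewrite (bigD1 i) //= eqxx mulr1n big1 ?addr0 // => w nw.
by rewrite eq_sym (negbTE nw).
Qed.

Section Join.
Variable R : rcfType.
Variable alpha : R.
Variable m : nat.

Lemma gj_ll X (a b : 'I_(gsize X)) : gadj (join X (complete m)) (lshift m a) (lshift m b) = gadj X a b.
Proof. exact: join_ll. Qed.
Lemma gj_lr X (a : 'I_(gsize X)) (b : 'I_m) : gadj (join X (complete m)) (lshift m a) (rshift (gsize X) b) = true.
Proof. exact: join_lr. Qed.
Lemma gj_rl X (a : 'I_m) (b : 'I_(gsize X)) : gadj (join X (complete m)) (rshift (gsize X) a) (lshift m b) = true.
Proof. exact: join_rl. Qed.
Lemma gj_rr X (a b : 'I_m) : gadj (join X (complete m)) (rshift (gsize X) a) (rshift (gsize X) b) = (a != b).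
Proof. exact: join_rr. Qed.
Lemma dj_l X (a : 'I_(gsize X)) : deg (join X (complete m)) (lshift m a) = (deg X a + m)%N.
Proof. exact: deg_join_l. Qed.
Lemma dj_r X (a : 'I_m) : deg (join X (complete m)) (rshift (gsize X) a) = (gsize X + m.-1)%N.
Proof. exact: deg_join_r. Qed.
Lemma AE X v w : Aalpha alpha X v w =
  alpha * (deg X v)%:R *+ (v == w) + (1 - alpha) * (gadj X v w)%:R.
Proof. exact: AalphaE. Qed.
Arguments AE : clear implicits.

Definition Wt (t : R) (n : nat) : 'M[R]_m :=
  \matrix_(k, k') ((t - alpha * (n + m.-1)%N%:R) *+ (k == k') - (1 - alpha) * (k != k')%:R).

Lemma join_block X t : t%:M - Aalpha alpha (join X (complete m)) =
  block_mx ((t - alpha * m%:R)%:M - Aalpha alpha X) (const_mx (- (1 - alpha)))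
           (const_mx (- (1 - alpha))) (Wt t (gsize X)).
Proof.
apply/matrixP => i j; rewrite -(splitK i) -(splitK j).
case: (split i) => a; case: (split j) => b /=.
- rewrite block_mxEul [in LHS]mxE mxNE (AE (join X (complete m))) gj_ll dj_l !(mxE, mxNE) eq_lshift.
  by case: (a == b); rewrite ?natrD; ring.
- rewrite block_mxEur [in LHS]mxE mxNE (AE (join X (complete m))) gj_lr !(mxE, mxNE) eq_lrshift.
  by rewrite !mulr0n /= mulr1 sub0r add0r.
- rewrite block_mxEdl [in LHS]mxE mxNE (AE (join X (complete m))) gj_rl !(mxE, mxNE) eq_rlshift.
  by rewrite !mulr0n /= mulr1 sub0r add0r.
- rewrite block_mxEdr [in LHS]mxE mxNE (AE (join X (complete m))) gj_rr dj_r !(mxE, mxNE) eq_rshift.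
  by case: (a == b); rewrite /= ?mulr1n ?mulr0n ?mulr0 ?addr0 ?subr0 ?add0r.
Qed.

Lemma rowsum X v : \sum_w Aalpha alpha X v w = (deg X v)%:R.
Proof.
under eq_bigr => w _ do rewrite (AE X).
rewrite big_split /= -mulr_sumr -degE (bigD1 v) //= eqxx mulr1n big1 ?addr0.
  by ring.
by move=> w nw; rewrite eq_sym (negbTE nw).
Qed.

Definition Dt (t : R) (n r : nat) : R :=
  \det (Wt t n - (const_mx (-(1-alpha)) : 'M_(m,n)) *m
     ((t - alpha * m%:R - r%:R)^-1 *: (const_mx (-(1-alpha)) : 'M_(n,m)))).

Lemma join_det X r t : regular X r ->
  (char_poly (Aalpha alpha X)).[t - alpha * m%:R] != 0 -> t - alpha * m%:R - r%:R != 0 ->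
  (char_poly (Aalpha alpha (join X (complete m)))).[t] =
  (char_poly (Aalpha alpha X)).[t - alpha * m%:R] * Dt t (gsize X) r.
Proof.
move=> rX hc hu.
have uX : ((t - alpha * m%:R)%:M - Aalpha alpha X) \in unitmx.
  by rewrite unitmxE unitfE -horner_char_poly.
rewrite !horner_char_poly join_block schur //.
congr (_ * _); rewrite /Dt; congr (\det (_ - _)).
rewrite -mulmxA; congr (_ *m _).
set u := t - alpha * m%:R.
set Xt := (u%:M - Aalpha alpha X).
set C := (const_mx (-(1-alpha)) : 'M_(gsize X, m)).
have hX : Xt *m C = (u - r%:R) *: C.
  apply/matrixP => i j; rewrite !mxE.
  rewrite /C /Xt; under eq_bigr => w _ do rewrite !(mxE, mxNE).
  rewrite -mulr_suml; congr (_ * _).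
  rewrite sumrB big_split /= -!mulr_sumr -degE !sum_delta rX; ring.
have e2 : C = (u - r%:R)^-1 *: (Xt *m C) by rewrite hX scalerA mulVf // scale1r.
by rewrite {1}e2 -scalemxAr mulKmx.
Qed.

Lemma cospec_of_join X Y r : regular X r -> regular Y r -> gsize X = gsize Y ->
  char_poly (Aalpha alpha (join X (complete m))) =
  char_poly (Aalpha alpha (join Y (complete m))) ->
  char_poly (Aalpha alpha X) = char_poly (Aalpha alpha Y).
Proof.
move=> rX rY eXY E.
set pJ := char_poly (Aalpha alpha (join X (complete m))).
set pX := char_poly (Aalpha alpha X); set pY := char_poly (Aalpha alpha Y).
pose c := alpha * m%:R.
apply: (@poly_eq_gen _ ((pJ \Po ('X + c%:P)) * pX * pY * ('X - (r%:R)%:P))).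
  have h1 : pJ \Po ('X + c%:P) != 0.
    by rewrite comp_poly_eq0 ?size_XaddC // monic_neq0 // char_poly_monic.
  by rewrite !mulf_neq0 ?h1 ?polyXsubC_eq0 ?monic_neq0 ?char_poly_monic.
move=> t; rewrite !hornerM horner_comp hornerXsubC hornerD hornerX hornerC.
rewrite !mulf_eq0 !negb_or => /andP [/andP [/andP [hJ hX] hY] hr].
have ht : t + c - c = t by rewrite addrK.
have dX := @join_det X r (t + c) rX; rewrite -/c ht in dX.
have dY := @join_det Y r (t + c) rY; rewrite -/c ht in dY.
have := dX hX hr; rewrite -/pJ => eX.
have eD : Dt (t + c) (gsize Y) r = Dt (t + c) (gsize X) r by rewrite eXY.
have := dY hY hr; rewrite -E -/pJ eD => eY.
have hD : Dt (t + c) (gsize X) r != 0.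
  by apply: contra hJ => /eqP h; rewrite eX h mulr0.
by apply: (mulIf hD); rewrite -eX -eY.
Qed.
End Join.


Lemma iso_deg X Y (f : 'I_(gsize X) -> 'I_(gsize Y)) : bijective f ->
  (forall x y, gadj Y (f x) (f y) = gadj X x y) -> forall x, deg Y (f x) = deg X x.
Proof.
move=> bf hf x; rewrite /deg !card_setE (reindex f) /=; last exact: onW_bij.
by apply: eq_bigr => w _; rewrite hf.
Qed.

Lemma iso_cospec (R : rcfType) (alpha : R) X Y : isomorphic X Y -> Aalpha_cospectral alpha X Y.
Proof.
case=> f [bf hf].
have e : gsize X = gsize Y by have := bij_eq_card bf; rewrite !card_ord.
apply: (perm_charpoly e bf) => i j.
by rewrite (@AalphaE R alpha X i j) (@AalphaE R alpha Y (f i) (f j)) hf (iso_deg bf hf) (inj_eq (bij_inj bf)).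
Qed.

Lemma iso_sym X Y : isomorphic X Y -> isomorphic Y X.
Proof.
case=> f [bf hf]; case: (bf) => g fg gf.
exists g; split; first by exists f.
by move=> x y; rewrite -hf !gf.
Qed.

Lemma iso_trans X Y Z : isomorphic X Y -> isomorphic Y Z -> isomorphic X Z.
Proof.
case=> f [bf hf] [h [bh hh]]; exists (h \o f); split; first exact: bij_comp.
by move=> x y /=; rewrite hh hf.
Qed.

Definition smap (A B C : Type) (f : A -> B) (u : A + C) : B + C :=
  match u with inl a => inl (f a) | inr c => inr c end.

Lemma iso_join X Y m : isomorphic X Y ->
  isomorphic (join X (complete m)) (join Y (complete m)).
Proof.
case=> f [bf hf]; case: (bf) => g fg gf.
exists (fun i => unsplit (smap f (split i))); split.
  exists (fun i => unsplit (smap g (split i))) => i; rewrite unsplitK;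
  by case: (split i) (splitK i) => a /= <-; rewrite ?fg ?gf.
move=> x y /=; rewrite /join_adj !unsplitK.
by case: (split x) => a; case: (split y) => b; rewrite /= ?hf.
Qed.


Unset Implicit Arguments.

Theorem lemma3p5 (R : rcfType) (alpha : R) (G H : graph) (r m : nat) :
  0 < alpha <= 1 ->
  regular G r ->
  Aalpha_determined alpha G ->
  (1 <= m)%N ->
  Aalpha_cospectral alpha H (join G (complete m)) ->
  (m <= #|[set v : 'I_(gsize H) | deg H v == (gsize G + m - 1)%N]|)%N ->
  isomorphic H (join G (complete m)).
Proof.
move=> /andP [a0 a1] rG Hdet m1 E Hcard.
set n := gsize G in Hcard *.
have eN : gsize H = (n + m)%N := char_size_eq E.
set D := [set v : 'I_(gsize H) | deg H v == (n + m - 1)%N] in Hcard *.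
have dom : forall v w, v \in D -> v != w -> gadj H v w.
  move=> v w; rewrite inE => /eqP dv nvw.
  have sub : [set w | gadj H v w] \subset [set~ v].
    apply/subsetP => u; rewrite !inE; apply: contraTneq => ->; by rewrite gadj_irr.
  have hc : #|[set w | gadj H v w]| = #|[set~ v]|.
    rewrite cardsC1 card_ord; change (deg H v = (gsize H).-1).
    by rewrite dv eN subn1.
  have := (elimT (subset_cardP hc) sub) w; rewrite !inE eq_sym nvw; done.
have x0 : 'I_(gsize H).
  apply: (@Ordinal _ 0); rewrite eN; lia.
pose s := enum (~: D) ++ enum D.
have cDC : (#|~: D| + #|D| = n + m)%N by rewrite addnC cardsC card_ord.
have size_s : size s = (n + m)%N by rewrite size_cat -!cardE.
have uniq_s : uniq s.
  rewrite cat_uniq !enum_uniq /= andbT; apply/hasPn => x.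
  by rewrite !mem_enum in_setC => ->.
pose g (i : 'I_(n + m)) : 'I_(gsize H) := nth x0 s i.
have ginj : injective g.
  move=> i j /eqP; rewrite /g nth_uniq ?size_s // => /eqP; exact: ord_inj.
have gD : forall k : 'I_m, g (rshift n k) \in D.
  move=> k; rewrite /g /= nth_cat -cardE ifF; last first.
    apply/negbTE; rewrite -leqNgt; lia.
  rewrite -mem_enum; apply: mem_nth; rewrite -cardE; have := ltn_ord k; lia.
pose adjH (a b : 'I_n) := gadj H (g (lshift m a)) (g (lshift m b)).
have symH : symmetric adjH by move=> a b; exact: gadj_sym.
have irrH : irreflexive adjH by move=> a; exact: gadj_irr.
pose H' := @Graph n adjH symH irrH.
have isoJH : isomorphic (join H' (complete m)) H.
  exists g; split.
    by apply: inj_card_bij => //; rewrite !card_ord eN.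
  move=> x y; rewrite -(splitK x) -(splitK y).
  case: (split x) => a; case: (split y) => b /=; rewrite /join_adj ?split_l ?split_r //.
  - rewrite gadj_sym; apply: dom => //; rewrite (inj_eq ginj) eq_rlshift //.
  - apply: dom => //; rewrite (inj_eq ginj) eq_rlshift //.
  - rewrite /= /complete_adj; case: eqP => [->|/eqP nab]; first by rewrite gadj_irr.
    by apply: dom => //; rewrite (inj_eq ginj) eq_rshift.
have E' : char_poly (Aalpha alpha (join H' (complete m))) =
          char_poly (Aalpha alpha (join G (complete m))).
  by rewrite (iso_cospec alpha isoJH).
have rH' : regular H' r := @reg_of_cospec R alpha H' G m r a0 rG erefl E'.
have cH' : Aalpha_cospectral alpha H' G := @cospec_of_join R alpha m H' G r rH' rG erefl E'.
have iH' := Hdet _ cH'.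
exact: iso_trans (iso_sym isoJH) (iso_join m iH').
Qed.
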